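(* Let $\mathcal{X}$, $f_i$, $\underline{y},\overline{y}$ be as in the context, and consider problem (SCP): $\min_{(y,x)\in\mathcal{X}}\sum_{i=1}^{n_y}f_i(y_i)+\sum_{\omega\in\Omega_1}p_\omega c_\omega^Tx_\omega$. Run the adaptive piecewise linear approximation algorithm described in the context, and assume that in every iteration $s$ the subproblem in step 3 is solved to an optimal solution $(\tilde{y}^s,\tilde{x}^s)$ that is an extreme point of $\mathcal{X}(\tilde{y}^s)=\{(y,x)\in\mathcal{X}: y_i=\tilde{y}^s_i\ \forall i\le n_{\mathrm{I}}\}$. Then the algorithm terminates after finitely many iterations, and the point it returns is a global optimum of (SCP).
   Context: Let $\Omega_1$ be a finite index set, $n_y\geq n_{\mathrm{I}}\geq0$ integers, $A\in\mathbb{R}^{m_1\times n_y}$, $b\in\mathbb{R}^{m_1}$, $D\in\mathbb{R}^{m_2\times n_y}$, and for each $\omega\in\Omega_1$: $p_\omega\in\mathbb{R}$, $c_\omega\in\mathbb{R}^{n_x}$, $B_\omega\in\mathbb{R}^{m_2\times n_x}$, $d_\omega\in\mathbb{R}^{m_2}$. $\mathcal{X}=\{(y,\{x_\omega\}_{\omega\in\Omega_1})\geq0: y\in\mathbb{Z}^{n_{\mathrm{I}}}\times\mathbb{R}^{n_y-n_{\mathrm{I}}},\ Ay=b,\ B_\omega x_\omega+Dy=d_\omega\ \forall\omega\}$ is assumed nonempty and bounded, with vectors $\underline{y},\overline{y}$ such that $\underline{y}\leq y\leq\overline{y}$ for all $(y,x)\in\mathcal{X}$. It is also assumed that for every $y\geq0$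 with $y\in\mathbb{Z}^{n_{\mathrm{I}}}\times\mathbb{R}^{n_y-n_{\mathrm{I}}}$ and $Ay=b$, and every $\omega$, the set $\{x\geq0:B_\omega x=d_\omega-Dy\}$ is nonempty. The $f_i:\mathbb{R}\to\mathbb{R}$ are concave and lower semicontinuous. Given breakpoints $y_i^{(1)}<\dots<y_i^{(k_i)}$, the piecewise linear function $\overline{f}_i$ on $[y_i^{(1)},y_i^{(k_i)}]$ is $\overline{f}_i(y_i)=\frac{f_i(y_i^{(j+1)})-f_i(y_i^{(j)})}{y_i^{(j+1)}-y_i^{(j)}}(y_i-y_i^{(j)})+f_i(y_i^{(j)})$ for $y_i\in[y_i^{(j)},y_i^{(j+1)}]$. Algorithm: (1) For each $i$ set breakpoints $(y_i^{(1)},y_i^{(2)})=(\underline{y}_i,\overline{y}_i)$, $k_i=2$; set $s=1$. (2) For each $i$ construct $\overline{f}^s_i$ from the current breakpoints. (3) Solve $\min_{(y,x)\in\mathcal{X}}\sum_i\overline{f}^s_i(y_i)+\sum_\omega p_\omega c_\omega^Tx_\omega$ to an optimal solution $(\tilde{y}^s,\{\tilde{x}^s_\omega\})$. (4) If $\overline{f}^s_i(\tilde{y}^s_i)\geq f_i(\tilde{y}^s_i)$ for all $i$, stop and return $(\tilde{y}^s,\{\tilde{x}^s_\omega\})$. (5) Otherwise, for each $i$ with $\overline{f}^s_i(\tilde{y}^s_i)<f_i(\tilde{y}^s_i)$, add $\tilde{y}^s_i$ as a new breakpoint ($k_i\leftarrow k_i+1$) and re-sort the breakpoints increasingly. (6)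 Set $s\leftarrow s+1$ and go to (2). *)

(* Defs.v *)
From HB Require Import structures.
From mathcomp Require Import all_boot all_order all_algebra.
From mathcomp Require Import reals.
Set Implicit Arguments. Unset Strict Implicit. Unset Printing Implicit Defensive.
Import Order.TTheory GRing.Theory Num.Theory.
Local Open Scope ring_scope.

Section Defs.
Variable R : realType.

Definition concave (f : R -> R) : Prop :=
  forall a b t, 0 <= t -> t <= 1 -> t * f a + (1 - t) * f b <= f (t * a + (1 - t) * b).

Definition lsc (f : R -> R) : Prop :=
  forall x e, 0 < e -> exists2 d, 0 < d & forall y, `|y - x| < d -> f x - e < f y.

(* Piecewise linear interpolant of f through the sorted breakpoints
   [:: y1; y2; ...; yk]: on [y_j, y_(j+1)] it is the chord of f between
   y_j and y_(j+1). (Values outside [y1, yk] are irrelevant: an arbitrary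
   extension is used.) *)
Fixpoint pwl (f : R -> R) (s : seq R) (y : R) : R :=
  match s with
  | a :: ((b :: _) as t) =>
      if y <= b then (f b - f a) / (b - a) * (y - a) + f a else pwl f t y
  | _ => f y
  end.

Definition inX (Om : finType) (ny nI nx m1 m2 : nat)
  (A : 'M[R]_(m1, ny)) (b : 'cV[R]_m1) (D : 'M[R]_(m2, ny))
  (B : Om -> 'M[R]_(m2, nx)) (d : Om -> 'cV[R]_m2)
  (y : 'cV[R]_ny) (x : Om -> 'cV[R]_nx) : Prop :=
  [/\ forall i : 'I_ny, 0 <= y i 0,
      forall w j, 0 <= x w j 0,
      forall i : 'I_ny, (i < nI)%N -> y i 0 \is a Num.int,
      A *m y = b &
      forall w, B w *m x w + D *m y = d w].

Definition inXfix (Om : finType) (ny nI nx m1 m2 : nat)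
  (A : 'M[R]_(m1, ny)) (b : 'cV[R]_m1) (D : 'M[R]_(m2, ny))
  (B : Om -> 'M[R]_(m2, nx)) (d : Om -> 'cV[R]_m2) (yt : 'cV[R]_ny)
  (y : 'cV[R]_ny) (x : Om -> 'cV[R]_nx) : Prop :=
  inX nI A b D B d y x /\ forall i : 'I_ny, (i < nI)%N -> y i 0 = yt i 0.

Definition extreme_point (Om : finType) (ny nx : nat)
  (S : 'cV[R]_ny -> (Om -> 'cV[R]_nx) -> Prop)
  (y : 'cV[R]_ny) (x : Om -> 'cV[R]_nx) : Prop :=
  S y x /\
  forall y1 x1 y2 x2 t, S y1 x1 -> S y2 x2 -> 0 < t -> t < 1 ->
    y = t *: y1 + (1 - t) *: y2 ->
    (forall w, x w = t *: x1 w + (1 - t) *: x2 w) ->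
    y1 = y /\ y2 = y /\ (forall w, x1 w = x w /\ x2 w = x w).

Definition second_cost (Om : finType) (nx : nat) (p : Om -> R)
  (c : Om -> 'cV[R]_nx) (x : Om -> 'cV[R]_nx) : R :=
  \sum_(w : Om) p w * \sum_(j < nx) c w j 0 * x w j 0.

Definition scp_obj (Om : finType) (ny nx : nat) (f : 'I_ny -> R -> R)
  (p : Om -> R) (c : Om -> 'cV[R]_nx) (y : 'cV[R]_ny) (x : Om -> 'cV[R]_nx) : R :=
  \sum_(i < ny) f i (y i 0) + second_cost p c x.

Definition approx_obj (Om : finType) (ny nx : nat) (f : 'I_ny -> R -> R)
  (bp : 'I_ny -> seq R)
  (p : Om -> R) (c : Om -> 'cV[R]_nx) (y : 'cV[R]_ny) (x : Om -> 'cV[R]_nx) : R :=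
  \sum_(i < ny) pwl (f i) (bp i) (y i 0) + second_cost p c x.

Definition stop_test (ny : nat) (f : 'I_ny -> R -> R) (bp : 'I_ny -> seq R)
  (y : 'cV[R]_ny) : Prop :=
  forall i, f i (y i 0) <= pwl (f i) (bp i) (y i 0).

Definition update_bp (ny : nat) (f : 'I_ny -> R -> R) (bp : 'I_ny -> seq R)
  (y : 'cV[R]_ny) (i : 'I_ny) : seq R :=
  if pwl (f i) (bp i) (y i 0) < f i (y i 0)
  then sort <=%R (y i 0 :: bp i) else bp i.

End Defs.

(* Main.v *)
Require Import Defs.
From HB Require Import structures.
From mathcomp Require Import all_boot all_order all_algebra.
From mathcomp Require Import reals.
From mathcomp Require Import ring lra.
From Stdlib Require Import Classical.
Import Order.TTheory GRing.Theory Num.Theory.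
Local Open Scope ring_scope.

Section Aux.
Variable R : realType.

Lemma chord_le (f : R -> R) a b y : concave f -> a <= y -> y <= b ->
  (f b - f a) / (b - a) * (y - a) + f a <= f y.
Proof.
move=> Hc ay yb.
have [ab|ab] := eqVneq a b.
  have ya : y = a by apply/eqP; rewrite eq_le ay andbT; rewrite ab.
  by rewrite ya subrr mulr0 add0r.
have ba : 0 < b - a by rewrite subr_gt0 lt_neqAle ab (le_trans ay yb).
set t := (b - y) / (b - a).
have t0 : 0 <= t by apply: divr_ge0; lra.
have t1 : t <= 1 by rewrite /t ler_pdivrMr //; lra.
have := Hc a b t t0 t1.
have -> : t * a + (1 - t) * b = y.
  rewrite /t; field; by rewrite subr_eq0 eq_sym.
have -> : (f b - f a) / (b - a) * (y - a) + f a = t * f a + (1 - t) * f b; last by [].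
rewrite /t; field; by rewrite subr_eq0 eq_sym.
Qed.

Lemma pwl_le (f : R -> R) y : concave f -> forall l a, sorted <=%R (a :: l) -> a <= y ->
  (exists2 z, z \in a :: l & y <= z) -> pwl f (a :: l) y <= f y.
Proof.
move=> Hc; elim=> [|b t IH] a /=; first by [].
move=> /andP[ab Hs] ay [z Hz yz].
case: ifP => yb; first exact: chord_le.
apply: IH => //; first by rewrite ltW // ltNge yb.
exists z => //.
move: Hz; rewrite in_cons => /orP[/eqP za|]; last by [].
by move: yb; rewrite (le_trans yz) // za.
Qed.

Lemma pwl_eq (f : R -> R) y : forall l a, sorted <=%R (a :: l) -> y \in a :: l ->
  pwl f (a :: l) y = f y.
Proof.
elim=> [|b t IH] a /=; first by [].
move=> /andP[ab Hs] Hy.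
have Hmin : all (fun z => b <= z) (b :: t).
  by rewrite /= lexx /=; apply: (order_path_min le_trans Hs).
case: ifP => yb.
  move: Hy; rewrite in_cons => /orP[/eqP ->|Hy]; first by rewrite subrr mulr0 add0r.
  have by_ : b <= y by move/allP: Hmin => /(_ y Hy).
  have yeb : y = b by apply/eqP; rewrite eq_le yb by_.
  have [ba|ba] := eqVneq b a; first by rewrite yeb ba !subrr mulr0 add0r.
  by rewrite yeb; field; rewrite subr_eq0.
apply: IH => //.
move: Hy; rewrite in_cons => /orP[/eqP ya|]; last by [].
by move: yb; rewrite ya ab.
Qed.

Lemma pwl_le_inv (f : R -> R) l lo hi y : concave f -> sorted <=%R l -> lo \in l -> hi \in l ->
  lo <= y -> y <= hi -> pwl f l y <= f y.
Proof.
case: l => [//|a l] Hc Hs Hlo Hhi ly yh.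
apply: pwl_le => //; last by exists hi.
apply: le_trans ly.
move: Hlo; rewrite in_cons => /orP[/eqP ->//|Hl].
by have /allP := order_path_min le_trans Hs; apply.
Qed.

Lemma pwl_eq_inv (f : R -> R) l y : sorted <=%R l -> y \in l -> pwl f l y = f y.
Proof. by case: l => [//|a l]; apply: pwl_eq. Qed.

Lemma eps_fin (T : finType) (g : T -> R) : (forall j, 0 < g j) ->
  exists2 e, 0 < e & forall j, e <= g j.
Proof.
move=> Hg.
suff [e e0 He] : exists2 e, 0 < e & forall j, j \in enum T -> e <= g j.
  by exists e => // j; apply: He; rewrite mem_enum.
elim: (enum T) => [|a s [e e0 He]]; first by exists 1.
exists (Num.min e (g a)); first by rewrite lt_min e0 Hg.
move=> j; rewrite in_cons => /orP[/eqP ->|Hj]; first by rewrite ge_min lexx orbT.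
by rewrite ge_min He.
Qed.

Lemma half_comb (V : lmodType R) (a w : V) e :
  a = 2^-1 *: (a + e *: w) + (1 - 2^-1) *: (a + (- e) *: w).
Proof.
have -> : 1 - 2^-1 = 2^-1 :> R by field.
rewrite -scalerDr scaleNr addrACA subrr addr0 -mulr2n -scaler_nat scalerA mulVf ?scale1r //.
by rewrite pnatr_eq0.
Qed.


Lemma coord_ok (a1 a2 e : R) : 0 <= a1 -> 0 <= a2 -> (a1 == 0) = (a2 == 0) ->
  0 < e -> e <= 1 -> e <= (if a1 == 0 then 1 else a1 / (a2 + 1)) ->
  0 <= a1 + e * (a1 - a2) /\ 0 <= a1 + (- e) * (a1 - a2).
Proof.
move=> h1 h2 hs e0 e1; case: ifP => [/eqP a10|a10] he.
  by move: hs; rewrite a10 eqxx => /esym/eqP ->; rewrite !subrr !mulr0 addr0.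
rewrite ler_pdivlMr ?ltr_wpDl // in he.
split; nra.
Qed.

Lemma comb_in (Om : finType) (ny nI nx m1 m2 : nat)
  (A : 'M[R]_(m1, ny)) (b : 'cV[R]_m1) (D : 'M[R]_(m2, ny))
  (B : Om -> 'M[R]_(m2, nx)) (d : Om -> 'cV[R]_m2) y1 x1 y2 x2 (k : R) :
  inX nI A b D B d y1 x1 -> inX nI A b D B d y2 x2 ->
  (forall i : 'I_ny, (i < nI)%N -> y2 i 0 = y1 i 0) ->
  (forall j, 0 <= y1 j 0 + k * (y1 j 0 - y2 j 0)) ->
  (forall w j, 0 <= x1 w j 0 + k * (x1 w j 0 - x2 w j 0)) ->
  inXfix nI A b D B d y1 (y1 + k *: (y1 - y2)) (fun w => x1 w + k *: (x1 w - x2 w)).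
Proof.
move=> [p1 q1 i1 A1 B1] [p2 q2 i2 A2 B2] Hint Hy Hx.
have Hfix : forall i : 'I_ny, (i < nI)%N -> (y1 + k *: (y1 - y2)) i 0 = y1 i 0.
  by move=> i Hi; rewrite !mxE Hint // subrr mulr0 addr0.
split=> //; split.
- by move=> j; rewrite !mxE.
- by move=> w j; rewrite !mxE.
- by move=> i Hi; rewrite Hfix // i1.
- by rewrite mulmxDr -scalemxAr mulmxBr A1 A2 subrr scaler0 addr0.
- move=> w; rewrite !mulmxDr -!scalemxAr !mulmxBr addrACA -scalerDr.
  by rewrite addrACA -opprD B1 B2 subrr scaler0 addr0.
Qed.

Lemma ext_unique (Om : finType) (ny nI nx m1 m2 : nat)
  (A : 'M[R]_(m1, ny)) (b : 'cV[R]_m1) (D : 'M[R]_(m2, ny))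
  (B : Om -> 'M[R]_(m2, nx)) (d : Om -> 'cV[R]_m2) y1 x1 y2 x2 :
  extreme_point (inXfix nI A b D B d y1) y1 x1 -> inX nI A b D B d y2 x2 ->
  (forall i : 'I_ny, (i < nI)%N -> y2 i 0 = y1 i 0) ->
  (forall j, (y1 j 0 == 0) = (y2 j 0 == 0)) ->
  (forall w j, (x1 w j 0 == 0) = (x2 w j 0 == 0)) -> y1 = y2.
Proof.
move=> [[X1 fix1] Hext] X2 Hint Sy Sx.
have X1' := X1; have X2' := X2.
case: X1' => [p1 q1 _ _ _]; case: X2' => [p2 q2 _ _ _].
have Gy : forall j : 'I_ny, 0 < (if y1 j 0 == 0 then 1 else y1 j 0 / (y2 j 0 + 1)).
  move=> j; case: ifP => // /negbT h; apply: divr_gt0; last by rewrite ltr_wpDl.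
  by rewrite lt_neqAle eq_sym h p1.
have [ey ey0 Hey] := @eps_fin _ _ Gy.
have Gx : forall wj : Om * 'I_nx, 0 <
   (if x1 wj.1 wj.2 0 == 0 then 1 else x1 wj.1 wj.2 0 / (x2 wj.1 wj.2 0 + 1)).
  move=> [w j] /=; case: ifP => // /negbT h; apply: divr_gt0; last by rewrite ltr_wpDl.
  by rewrite lt_neqAle eq_sym h q1.
have [ex ex0 Hex] := @eps_fin _ _ Gx.
set e := Num.min 1 (Num.min ey ex).
have e0 : 0 < e by rewrite /e !lt_min ltr01 ey0 ex0.
have e1 : e <= 1 by rewrite /e ge_min lexx.
have ey' : forall j, e <= (if y1 j 0 == 0 then 1 else y1 j 0 / (y2 j 0 + 1)).
  by move=> j; apply: le_trans (Hey j); rewrite /e !ge_min lexx orbT.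
have ex' : forall w j, e <= (if x1 w j 0 == 0 then 1 else x1 w j 0 / (x2 w j 0 + 1)).
  by move=> w j; apply: le_trans (Hex (w, j)); rewrite /e !ge_min lexx !orbT.
have Cy j := @coord_ok _ _ _ (p1 j) (p2 j) (Sy j) e0 e1 (ey' j).
have Cx w j := @coord_ok _ _ _ (q1 w j) (q2 w j) (Sx w j) e0 e1 (ex' w j).
have U := @comb_in _ _ _ _ _ _ _ _ _ _ _ _ _ _ _ _ X1 X2 Hint (fun j => (Cy j).1) (fun w j => (Cx w j).1).
have V := @comb_in _ _ _ _ _ _ _ _ _ _ _ _ _ _ _ _ X1 X2 Hint (fun j => (Cy j).2) (fun w j => (Cx w j).2).
have h2 : (0 : R) < 2^-1 by rewrite invr_gt0.
have h2' : (2^-1 : R) < 1 by rewrite invf_lt1 // ltr1n.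
have [Hu _] := Hext _ _ _ _ _ U V h2 h2' (half_comb _ _ _ _) (fun w => half_comb _ _ _ _).
move/eqP: Hu; rewrite -subr_eq0 addrAC subrr add0r scaler_eq0 => /orP[/eqP e00|].
  by move: e0; rewrite e00 ltxx.
by rewrite subr_eq0 => /eqP.
Qed.

End Aux.

Arguments pwl_le_inv {R f l lo hi y}.
Arguments pwl_eq_inv {R f l y}.
Arguments ext_unique {R Om ny nI nx m1 m2 A b D B d y1 x1 y2 x2}.

Lemma min_ex (P : nat -> Prop) n : P n -> exists s, P s /\ forall t, (t < s)%N -> ~ P t.
Proof.
elim/ltn_ind: n => n IH Pn.
case: (classic (exists t, (t < n)%N /\ P t)) => [[t [lt Pt]]|H].
  exact: IH lt Pt.
by exists n; split => // t lt Pt; apply: H; exists t.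
Qed.

Lemma undup_map_le (K T : eqType) (key : nat -> K) (g : nat -> T) l :
  (forall t1 t2, key t1 = key t2 -> g t1 = g t2) ->
  (size (undup (map g l)) <= size (undup (map key l)))%N.
Proof.
move=> Hk; elim: l => [|a l IH] //=.
case: (boolP (key a \in map key l)) => hk.
  have -> : g a \in map g l.
    by case/mapP: hk => t ht /Hk ->; apply: map_f.
  exact: IH.
by case: ifP => _ //=; apply: leqW.
Qed.

Lemma size_undup_sort (R : realType) (l : seq R) y :
  size (undup (sort <=%R (y :: l))) = size (undup (y :: l)).
Proof.
apply: perm_size; apply: uniq_perm; rewrite ?undup_uniq // => z.
by rewrite !mem_undup mem_sort.
Qed.
Theorem theorem3 (R : realType) (Om : finType) (ny nI nx m1 m2 : nat)
  (A : 'M[R]_(m1, ny)) (b : 'cV[R]_m1) (D : 'M[R]_(m2, ny))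
  (p : Om -> R) (c : Om -> 'cV[R]_nx) (B : Om -> 'M[R]_(m2, nx))
  (d : Om -> 'cV[R]_m2) (f : 'I_ny -> R -> R) (ylo yhi : 'cV[R]_ny)
  (bp : nat -> 'I_ny -> seq R) (ys : nat -> 'cV[R]_ny)
  (xs : nat -> Om -> 'cV[R]_nx) :
  (nI <= ny)%N ->
  (* X nonempty and bounded *)
  (exists y x, inX nI A b D B d y x) ->
  (exists M : R, forall y x, inX nI A b D B d y x ->
      (forall i, `|y i 0| <= M) /\ (forall w j, `|x w j 0| <= M)) ->
  (forall y x, inX nI A b D B d y x -> forall i, ylo i 0 <= y i 0 <= yhi i 0) ->
  (* relatively complete recourse *)
  (forall y : 'cV[R]_ny, (forall i, 0 <= y i 0) ->
      (forall i : 'I_ny, (i < nI)%N -> y i 0 \is a Num.int) -> A *m y = b ->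
      forall w, exists x : 'cV[R]_nx, (forall j, 0 <= x j 0) /\ B w *m x = d w - D *m y) ->
  (forall i, concave (f i)) -> (forall i, lsc (f i)) ->
  (* step 1 *)
  (forall i, bp 0%N i = [:: ylo i 0; yhi i 0]) ->
  (* step 3: optimal solution which is an extreme point of X(ys s) *)
  (forall s : nat, (forall t, (t < s)%N -> ~ stop_test f (bp t) (ys t)) ->
     [/\ inX nI A b D B d (ys s) (xs s),
         (forall y x, inX nI A b D B d y x ->
            approx_obj f (bp s) p c (ys s) (xs s) <= approx_obj f (bp s) p c y x) &
         extreme_point (inXfix nI A b D B d (ys s)) (ys s) (xs s)]) ->
  (* steps 4-6: if the stopping test fails, refine the breakpoints *)
  (forall s : nat, (forall t, (t <= s)%N -> ~ stop_test f (bp t) (ys t)) ->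
     forall i, bp s.+1 i = update_bp f (bp s) (ys s) i) ->
  (* conclusion: finite termination, and the returned point is a global optimum *)
  exists s : nat,
    [/\ stop_test f (bp s) (ys s),
        (forall t, (t < s)%N -> ~ stop_test f (bp t) (ys t)),
        inX nI A b D B d (ys s) (xs s) &
        forall y x, inX nI A b D B d y x ->
          scp_obj f p c (ys s) (xs s) <= scp_obj f p c y x].
Proof.
move=> HnI [y0 [x0 X0]] [M HM] Hrange Hrec Hconc Hlsc Hbp0 H3 Hup.
pose stop s := stop_test f (bp s) (ys s).
have Inv : forall s, (forall t, (t < s)%N -> ~ stop t) -> forall i,
    [/\ sorted <=%R (bp s i), ylo i 0 \in bp s i & yhi i 0 \in bp s i].
  elim=> [|s IH] Hns i.
    rewrite Hbp0 !inE !eqxx ?orbT; split => //=.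
    by rewrite andbT; have /andP[+ +] := Hrange _ _ X0 i; apply: le_trans.
  have [Hs Hlo Hhi] : [/\ sorted <=%R (bp s i), ylo i 0 \in bp s i & yhi i 0 \in bp s i].
    by apply: IH => t ht; apply: Hns; rewrite ltnS ltnW.
  rewrite (Hup s (fun t ht => Hns t ht) i) /update_bp.
  case: ifP => _ //; split; first by apply: sort_sorted => a0 a1; exact: le_total.
    by rewrite mem_sort inE Hlo orbT.
  by rewrite mem_sort inE Hhi orbT.
have Hex : exists n, stop n.
  apply: NNPP => Hno.
  have Hns : forall s, ~ stop s by move=> s Hs; apply: Hno; exists s.
  have Hall : forall s t, (t < s)%N -> ~ stop t by move=> s t _; exact: Hns t.
  pose N := Num.truncn M.
  pose key (t : nat) : ({set 'I_ny} * {set (Om * 'I_nx)} * {ffun 'I_ny -> 'I_N.+1})%type :=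
    ([set j | ys t j 0 != 0], [set wj | xs t wj.1 wj.2 0 != 0],
     [ffun i => inord (Num.truncn (ys t i 0))]).
  have Hnat : forall t (i : 'I_ny), (i < nI)%N -> (Num.truncn (ys t i 0))%:R = ys t i 0.
    move=> t i Hi; have [[pp _ Hint _ _] _ _] := H3 t (Hall t).
    by rewrite truncnK // natrEint Hint // pp.
  have Hlt : forall t (i : 'I_ny), (Num.truncn (ys t i 0%R) < N.+1)%N.
    move=> t i; have [X _ _] := H3 t (Hall t).
    rewrite ltnS; apply: le_truncn.
    have := (HM _ _ X).1 i; apply: le_trans; exact: ler_norm.
  have Hkey : forall t1 t2, key t1 = key t2 -> ys t1 = ys t2.
    move=> t1 t2 Hk.
    have [X1 _ E1] := H3 t1 (Hall t1).
    have [X2 _ _] := H3 t2 (Hall t2).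
    apply: (ext_unique E1 X2).
    - move=> i Hi; rewrite -Hnat // -[RHS]Hnat //; congr (_%:R).
      have := congr1 (fun k : ({set 'I_ny} * {set (Om * 'I_nx)} * {ffun 'I_ny -> 'I_N.+1})%type => nat_of_ord (k.2 i)) Hk.
      by rewrite /= !ffunE !inordK.
    - move=> j; have := congr1 (fun k : ({set 'I_ny} * {set (Om * 'I_nx)} * {ffun 'I_ny -> 'I_N.+1})%type => j \in k.1.1) Hk.
      by rewrite /= !inE => h; rewrite -[LHS]negbK h negbK.
    - move=> w j; have := congr1 (fun k : ({set 'I_ny} * {set (Om * 'I_nx)} * {ffun 'I_ny -> 'I_N.+1})%type => (w, j) \in k.1.2) Hk.
      by rewrite /= !inE => h; rewrite -[LHS]negbK h negbK.
  pose Phi s := (\sum_(i < ny) size (undup (bp s i)))%N.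
  have Grow : forall s, (s <= Phi s)%N.
    elim=> [|s IH] //.
    have [i0 Hi0] : exists i0, pwl (f i0) (bp s i0) (ys s i0 0) < f i0 (ys s i0 0).
      apply: NNPP => H; apply: (Hns s) => i; rewrite leNgt; apply/negP => hlt.
      by apply: H; exists i.
    have Hup' := Hup s (fun t _ => Hns t).
    have Hle : forall i, (size (undup (bp s i)) <= size (undup (bp s.+1 i)))%N.
      move=> i; rewrite Hup' /update_bp; case: ifP => _ //.
      by rewrite size_undup_sort /=; case: ifP => _ //.
    have Hlt0 : (size (undup (bp s i0)) < size (undup (bp s.+1 i0)))%N.
      rewrite Hup' /update_bp Hi0 size_undup_sort /=.
      case: ifP => // hin.
      have [Hs _ _] := Inv s (Hall s) i0.
      by move: Hi0; rewrite (pwl_eq_inv Hs hin) ltxx.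
    apply: (@leq_trans (Phi s).+1); first by rewrite ltnS.
    rewrite /Phi (bigD1 i0) //= [X in (_ <= X)%N](bigD1 i0) //= -addSn leq_add //.
    by apply: leq_sum => i _; exact: Hle i.
  have Hsub : forall s i z, z \in bp s i ->
      [\/ z = ylo i 0, z = yhi i 0 | exists2 t, (t < s)%N & z = ys t i 0].
    elim=> [|s IH] i z.
      by rewrite Hbp0 !inE => /orP[/eqP ->|/eqP ->]; [constructor 1|constructor 2].
    rewrite (Hup s (fun t _ => Hns t)) /update_bp; case: ifP => _.
      rewrite mem_sort inE => /orP[/eqP ->|/IH [->|->|[t ht ->]]].
      - by constructor 3; exists s.
      - by constructor 1.
      - by constructor 2.
      - by constructor 3; exists t => //; rewrite ltnS ltnW.
    move=> /IH [->|->|[t ht ->]].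
      - by constructor 1.
      - by constructor 2.
      - by constructor 3; exists t => //; rewrite ltnS ltnW.
  have Bound : forall s, (Phi s <= \sum_(i < ny)
      (#|{: ({set 'I_ny} * {set (Om * 'I_nx)} * {ffun 'I_ny -> 'I_N.+1})%type}|).+2)%N.
    move=> s; apply: leq_sum => i _.
    apply: (@leq_trans (size [:: ylo i 0, yhi i 0 & undup (map (fun t => ys t i 0) (iota 0 s))])).
      apply: uniq_leq_size; first exact: undup_uniq.
      move=> z; rewrite mem_undup => /Hsub [->|->|[t ht ->]]; rewrite !inE ?eqxx ?orbT //.
      apply/orP; right; apply/orP; right; rewrite mem_undup; apply/mapP; exists t => //.
      by rewrite mem_iota.
    rewrite /= !ltnS.
    apply: (@leq_trans (size (undup (map key (iota 0 s))))).
      by apply: undup_map_le => t1 t2 /Hkey ->.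
    have /card_uniqP <- := undup_uniq (map key (iota 0 s)).
    exact: max_card.
  set S := (\sum_(i < ny) _)%N in Bound.
  by have := leq_trans (Grow S.+1) (Bound S.+1); rewrite ltnn.
have [n0 Hn0] := Hex.
have [s [Hs Hmin]] := @min_ex stop n0 Hn0.
have [Xs Opt _] := H3 s Hmin.
have Iv := Inv s Hmin.
exists s; split => // y x Xyx.
apply: (le_trans _ (le_trans (Opt y x Xyx) _)).
  rewrite /scp_obj /approx_obj lerD2r; apply: ler_sum => i _; exact: Hs i.
rewrite /scp_obj /approx_obj lerD2r; apply: ler_sum => i _.
have [So Lo Hi] := Iv i.
have /andP[l1 l2] := Hrange _ _ Xyx i.
exact: pwl_le_inv (Hconc i) So Lo Hi l1 l2.
Qed.
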